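(* Let $(\mathfrak{g},[\cdot,\cdot]_{\mathfrak{g}},\phi_{\mathfrak{g}})$ be a weakly involutive Hom-Lie algebra, $r\in\mathfrak g\otimes\mathfrak g$, and $\Delta(x)=(\mathrm{ad}_x\otimes\phi_{\mathfrak g}+\phi_{\mathfrak g}\otimes\mathrm{ad}_x)r$. Then for all $x,y\in\mathfrak g$ (juxtaposition denoting composition): (a) $\Delta(\phi_{\mathfrak g}(x))-(\phi_{\mathfrak g}\otimes\phi_{\mathfrak g})\Delta(x)=(\mathrm{ad}_{\phi_{\mathfrak g}(x)}\phi_{\mathfrak g}\otimes\phi_{\mathfrak g}-\phi_{\mathfrak g}\otimes\mathrm{ad}_{\phi_{\mathfrak g}(x)}\phi_{\mathfrak g})(\phi_{\mathfrak g}\otimes\mathrm{Id}-\mathrm{Id}\otimes\phi_{\mathfrak g})r$; (b) $(\phi_{\mathfrak g}^2\otimes\mathrm{Id})\Delta(x)-\Delta(x)=(\phi_{\mathfrak g}\otimes\mathrm{ad}_x)(\phi_{\mathfrak g}\otimes\mathrm{Id}+\mathrm{Id}\otimes\phi_{\mathfrak g})(\phi_{\mathfrak g}\otimes\mathrm{Id}-\mathrm{Id}\otimes\phi_{\mathfrak g})r$; (c) $\Delta[x,y]_{\mathfrak g}-(\mathrm{ad}_{\phi_{\mathfrak g}(x)}\Delta(y)-\mathrm{ad}_{\phi_{\mathfrak g}(y)}\Delta(x))=(\mathrm{ad}_{[x,y]_{\mathfrak g}}\phi_{\mathfrak g}\otimes\phi_{\mathfrak g}-\phi_{\mathfrak g}\otimes\mathrm{ad}_{[x,y]_{\mathfrak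 g}}\phi_{\mathfrak g})(\phi_{\mathfrak g}\otimes\mathrm{Id}-\mathrm{Id}\otimes\phi_{\mathfrak g})r$.
   Context: A Hom-Lie algebra $(\mathfrak{g},[\cdot,\cdot]_{\mathfrak{g}},\phi_{\mathfrak{g}})$: skew-symmetric bilinear bracket and linear map with $\phi_{\mathfrak g}[x,y]=[\phi_{\mathfrak g}x,\phi_{\mathfrak g}y]$ and $[\phi_{\mathfrak g}(x),[y,z]]+[\phi_{\mathfrak g}(y),[z,x]]+[\phi_{\mathfrak g}(z),[x,y]]=0$; weakly involutive if $[\phi_{\mathfrak g}^2(x),y]=[x,y]$ for all $x,y$. $\mathrm{ad}_xy=[x,y]_{\mathfrak g}$; for $z\in\mathfrak g$ and $t\in\mathfrak g\otimes\mathfrak g$, $\mathrm{ad}_zt$ means $(\mathrm{ad}_z\otimes\phi_{\mathfrak g}+\phi_{\mathfrak g}\otimes\mathrm{ad}_z)t$ (this is the meaning of $\mathrm{ad}_{\phi_{\mathfrak g}(x)}\Delta(y)$ in (c)). *)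

(* Defs.v *)
(* Finite-dimensional Hom-Lie algebras g = K^n (row vectors),
   with g ⊗ g identified with n×n matrices: the tensor sum_{ij} t_ij e_i ⊗ e_j
   is the matrix t, and the pure tensor u ⊗ v is the outer product u^T *m v. *)
From mathcomp Require Import all_boot all_order all_algebra.
Set Implicit Arguments. Unset Strict Implicit. Unset Printing Implicit Defensive.
Import GRing.Theory.
Local Open Scope ring_scope.

Definition tens (K : fieldType) (n : nat) (u v : 'rV[K]_n) : 'M[K]_n := u^T *m v.

Definition tmap (K : fieldType) (n : nat) (f h : 'rV[K]_n -> 'rV[K]_n)
  (t : 'M[K]_n) : 'M[K]_n :=
  \sum_(i < n) \sum_(j < n)
     t i j *: tens (f (delta_mx ord0 i)) (h (delta_mx ord0 j)).

Definition HomLie (K : fieldType) (n : nat)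
  (br : 'rV[K]_n -> 'rV[K]_n -> 'rV[K]_n) (phi : 'rV[K]_n -> 'rV[K]_n) : Prop :=
  (forall y, linear (br ^~ y)) /\
  (forall x, linear (br x)) /\
  linear phi /\
  (forall x y, br x y = - br y x) /\
  (forall x y, phi (br x y) = br (phi x) (phi y)) /\
  (forall x y z, br (phi x) (br y z) + br (phi y) (br z x)
                     + br (phi z) (br x y) = 0).

Definition weakly_involutive (K : fieldType) (n : nat)
  (br : 'rV[K]_n -> 'rV[K]_n -> 'rV[K]_n) (phi : 'rV[K]_n -> 'rV[K]_n) : Prop :=
  forall x y, br (phi (phi x)) y = br x y.

Definition ad (K : fieldType) (n : nat)
  (br : 'rV[K]_n -> 'rV[K]_n -> 'rV[K]_n) (x : 'rV[K]_n) : 'rV[K]_n -> 'rV[K]_n :=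
  br x.

Definition adT (K : fieldType) (n : nat)
  (br : 'rV[K]_n -> 'rV[K]_n -> 'rV[K]_n) (phi : 'rV[K]_n -> 'rV[K]_n)
  (z : 'rV[K]_n) (t : 'M[K]_n) : 'M[K]_n :=
  tmap (ad br z) phi t + tmap phi (ad br z) t.

Definition Delta (K : fieldType) (n : nat)
  (br : 'rV[K]_n -> 'rV[K]_n -> 'rV[K]_n) (phi : 'rV[K]_n -> 'rV[K]_n)
  (r : 'M[K]_n) (x : 'rV[K]_n) : 'M[K]_n :=
  adT br phi x r.

(* Main.v *)
From HB Require Import structures.
Require Import Defs.
From mathcomp Require Import all_boot all_order all_algebra.
Import GRing.Theory.
Local Open Scope ring_scope.

Section H.
Variables (K : fieldType) (n : nat).
Implicit Types (f g h k : 'rV[K]_n -> 'rV[K]_n) (M N : 'M[K]_n).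

Lemma lin1E f (lf : linear f) u : u *m lin1_mx f = f u.
Proof.
pose fL : {linear 'rV[K]_n -> 'rV[K]_n} := HB.pack f (GRing.isLinear.Build K _ _ _ f lf).
exact: (mul_rV_lin1 fL).
Qed.

Lemma linB f (lf : linear f) u v : f (u - v) = f u - f v.
Proof.
pose fL : {linear 'rV[K]_n -> 'rV[K]_n} := HB.pack f (GRing.isLinear.Build K _ _ _ f lf).
exact: (linearB fL).
Qed.

Lemma linN f (lf : linear f) v : f (- v) = - f v.
Proof.
pose fL : {linear 'rV[K]_n -> 'rV[K]_n} := HB.pack f (GRing.isLinear.Build K _ _ _ f lf).
exact: (linearN fL).
Qed.

Lemma lin_comp f g : linear f -> linear g -> linear (f \o g).
Proof. by move=> lf lg a u v /=; rewrite lg lf. Qed.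

Lemma tmapE f h M : tmap f h M = (lin1_mx f)^T *m M *m lin1_mx h.
Proof.
apply/matrixP => a b; rewrite /tmap summxE.
rewrite !mxE; under [RHS]eq_bigr => j _ do rewrite !mxE big_distrl /=.
rewrite exchange_big /=; apply: eq_bigr => i _; rewrite summxE; apply: eq_bigr => j _.
rewrite !mxE big_ord1 !mxE; by rewrite mulrA [f _ _ _ * _]mulrC.
Qed.

Lemma row_lin1 f i : row i (lin1_mx f) = f (delta_mx 0 i).
Proof. by apply/rowP => j; rewrite !mxE. Qed.

Lemma lin1_comp f g : linear f -> lin1_mx (f \o g) = lin1_mx g *m lin1_mx f.
Proof.
move=> lf; apply/row_matrixP => i; rewrite row_mul !row_lin1 lin1E //.
Qed.

Lemma lin1_ext f g : f =1 g -> lin1_mx f = lin1_mx g.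
Proof. by move=> e; apply/matrixP => i j; rewrite !mxE e. Qed.

Lemma lin1_B k f g : (forall u, k u = f u - g u) -> lin1_mx k = lin1_mx f - lin1_mx g.
Proof. by move=> e; apply/matrixP => i j; rewrite !mxE e !mxE. Qed.

Lemma tmapD f h M N : tmap f h (M + N) = tmap f h M + tmap f h N.
Proof. by rewrite !tmapE mulmxDr mulmxDl. Qed.

Lemma tmapB f h M N : tmap f h (M - N) = tmap f h M - tmap f h N.
Proof. by rewrite !tmapE mulmxBr mulmxBl. Qed.

Lemma tmapN f h M : tmap f h (- M) = - tmap f h M.
Proof. by rewrite !tmapE mulmxN mulNmx. Qed.

Lemma tmap_comp f h f' h' M : linear f -> linear h ->
  tmap f h (tmap f' h' M) = tmap (f \o f') (h \o h') M.
Proof.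
move=> lf lh; rewrite !tmapE (@lin1_comp f f' lf) (@lin1_comp h h' lh) trmx_mul !mulmxA.
Timeout 30 reflexivity.
Qed.

Lemma tmap_ext f h f' h' M : f =1 f' -> h =1 h' -> tmap f h M = tmap f' h' M.
Proof. by move=> e1 e2; rewrite !tmapE (@lin1_ext _ _ e1) (@lin1_ext _ _ e2). Qed.

Lemma tmapBl k f g h M : (forall u, k u = f u - g u) ->
  tmap k h M = tmap f h M - tmap g h M.
Proof.
move=> e; rewrite !tmapE; have -> : (lin1_mx k)^T = (lin1_mx f)^T - (lin1_mx g)^T.
  by apply/matrixP => i j; rewrite !mxE e !mxE.
by rewrite !mulmxBl.
Qed.

Lemma tmapBr k f g h M : (forall u, k u = f u - g u) ->
  tmap h k M = tmap h f M - tmap h g M.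
Proof. by move=> e; rewrite !tmapE (@lin1_B _ _ _ e) mulmxBr. Qed.
End H.

Lemma ida (V : zmodType) (A B C E : V) : A + E - (B + C) = A - B - (C - E).
Proof. by rewrite opprB opprD !addrA [A + E - B]addrAC. Qed.

Lemma idb (V : zmodType) (A B C Y : V) : A + B - (A + C) = B - Y + (Y - C).
Proof. by rewrite opprD addrACA subrr add0r addrA subrK. Qed.

Lemma idc (V : zmodType) (A B a1 b1 a4 b4 U W C E : V) : a1 - b1 = C -> a4 - b4 = E ->
  A + B - (a1 + U + (W + a4) - (b1 + W + (U + b4))) = A - C - (E - B).
Proof.
move=> <- <-.
have -> : a1 + U + (W + a4) = (a1 + a4) + (U + W).
  by rewrite [W + a4]addrC addrACA.
have -> : b1 + W + (U + b4) = (U + W) + (b1 + b4).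
  by rewrite [b1 + W]addrC addrACA [W + U]addrC.
rewrite addrKA [- (b1 + b4)]opprD [a1 + a4 + _]addrACA; exact: ida.
Qed.

Lemma lin_id (K : fieldType) n : linear (@id 'rV[K]_n).
Proof. by []. Qed.

Ltac lins lbr lphi := do 4 try first [ exact: lphi | exact: lbr | exact: lin_id | apply: lin_comp ].

Theorem lemma4p1 (K : fieldType) (n : nat)
  (br : 'rV[K]_n -> 'rV[K]_n -> 'rV[K]_n) (phi : 'rV[K]_n -> 'rV[K]_n)
  (r : 'M[K]_n) :
  HomLie br phi -> weakly_involutive br phi ->
  forall x y : 'rV[K]_n,
  let D := Delta br phi r in
  let s := tmap phi id r - tmap id phi r in
  [/\ (* (a) *)
      D (phi x) - tmap phi phi (D x) =
        tmap (ad br (phi x) \o phi) phi s - tmap phi (ad br (phi x) \o phi) s,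
      (* (b) *)
      tmap (phi \o phi) id (D x) - D x =
        tmap phi (ad br x) (tmap phi id s + tmap id phi s) &
      (* (c) *)
      D (br x y) - (adT br phi (phi x) (D y) - adT br phi (phi y) (D x)) =
        tmap (ad br (br x y) \o phi) phi s - tmap phi (ad br (br x y) \o phi) s].
Proof.
case=> lbl [lbr [lphi [asym [hom jac]]]] winv x y D s.
have F2 z u : br z (phi (phi u)) = br z u.
  by rewrite asym winv -asym.
have F3 z u : phi (phi (br z u)) = br z u.
  by rewrite !hom winv F2.
rewrite /D /Delta /adT /s; split.
- rewrite !(tmapD, tmapB, tmapN) !tmap_comp; try by lins lbr lphi.
  rewrite (@tmap_ext _ _ (phi \o ad br x) _ (ad br (phi x) \o phi) (phi \o phi)); try (by move=> u; rewrite /= /ad ?hom ?F2 ?F3).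
  rewrite (@tmap_ext _ _ (phi \o phi) (phi \o ad br x) (phi \o phi) (ad br (phi x) \o phi)); try (by move=> u; rewrite /= /ad ?hom ?F2 ?F3).
  rewrite (@tmap_ext _ _ ((ad br (phi x) \o phi) \o phi) (phi \o id) (ad br (phi x)) phi); try (by move=> u; rewrite /= /ad ?hom ?F2 ?F3).
  rewrite (@tmap_ext _ _ ((ad br (phi x) \o phi) \o id) (phi \o phi) (ad br (phi x) \o phi) (phi \o phi)) //.
  rewrite (@tmap_ext _ _ (phi \o phi) ((ad br (phi x) \o phi) \o id) (phi \o phi) (ad br (phi x) \o phi)) //.
  rewrite (@tmap_ext _ _ (phi \o id) ((ad br (phi x) \o phi) \o phi) phi (ad br (phi x))); try (by move=> u; rewrite /= /ad ?hom ?F2 ?F3).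
  exact: ida.
- rewrite !(tmapD, tmapB, tmapN, tmap_comp); try by lins lbr lphi.
  rewrite (@tmap_ext _ _ ((phi \o phi) \o ad br x) (id \o phi) (ad br x) (phi)); try (by move=> u; rewrite /= /ad ?hom ?F2 ?F3).
  rewrite (@tmap_ext _ _ ((phi \o phi) \o phi) (id \o ad br x) ((phi \o phi) \o phi) (ad br x)); try (by move=> u; rewrite /= /ad ?hom ?F2 ?F3).
  rewrite (@tmap_ext _ _ ((phi \o phi) \o id) ((ad br x \o id) \o phi) (phi \o phi) (ad br x \o phi)); try (by move=> u; rewrite /= /ad ?hom ?F2 ?F3).
  rewrite (@tmap_ext _ _ ((phi \o id) \o id) ((ad br x \o phi) \o phi) (phi) (ad br x)); try (by move=> u; rewrite /= /ad ?hom ?F2 ?F3).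
  exact: idb.
- rewrite !(tmapD, tmapB, tmapN, tmap_comp); try by lins lbr lphi.
  rewrite (@tmap_ext _ _ (ad br (phi x) \o phi) (phi \o ad br y) (ad br (phi x) \o phi) (ad br (phi y) \o phi)); try (by move=> u; rewrite /= /ad ?hom ?F2 ?F3).
  rewrite (@tmap_ext _ _ (phi \o ad br x) (ad br (phi y) \o phi) (ad br (phi x) \o phi) (ad br (phi y) \o phi)); try (by move=> u; rewrite /= /ad ?hom ?F2 ?F3).
  rewrite (@tmap_ext _ _ (phi \o ad br y) (ad br (phi x) \o phi) (ad br (phi y) \o phi) (ad br (phi x) \o phi)); try (by move=> u; rewrite /= /ad ?hom ?F2 ?F3).
  rewrite (@tmap_ext _ _ (ad br (phi y) \o phi) (phi \o ad br x) (ad br (phi y) \o phi) (ad br (phi x) \o phi)); try (by move=> u; rewrite /= /ad ?hom ?F2 ?F3).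
  rewrite (@tmap_ext _ _ ((ad br (br x y) \o phi) \o phi) (phi \o id) (ad br (br x y)) (phi)); try (by move=> u; rewrite /= /ad ?hom ?F2 ?F3).
  rewrite (@tmap_ext _ _ (phi \o id) ((ad br (br x y) \o phi) \o phi) (phi) (ad br (br x y))); try (by move=> u; rewrite /= /ad ?hom ?F2 ?F3).
  have J u : br (br x y) (phi u) = br (phi x) (br y u) - br (phi y) (br x u).
    move: (jac x y u); rewrite (asym u x) (@linN _ _ _ (lbr (phi y))) (asym (phi u) (br x y)).
    by move/eqP; rewrite addr_eq0 opprK => /eqP ->.
  apply: idc; symmetry; [apply: tmapBl | apply: tmapBr] => u /=; rewrite /ad; exact: J.
Qed.
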